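(* Let $\varrho$ be the golden mean substitution on the alphabet $\{A,B\}$, $\varrho(A)=AB$, $\varrho(B)=A$, and let $\mathcal{F}_n=\varrho^n(A)$ for $n\ge 0$ (so $\mathcal{F}_{n+1}=\mathcal{F}_n\mathcal{F}_{n-1}$ for $n\ge1$), and let $\mathcal{F}_\infty$ be the infinite Fibonacci word, the limit of $\mathcal{F}_n$ (each $\mathcal{F}_n$ being a prefix of $\mathcal{F}_{n+1}$). Let $\mathcal{S}$ be a finite subword (a block of consecutive, whole letters) of $\mathcal{F}_\infty$. Then for every $n\ge 1$ with $|\mathcal{S}|\le|\mathcal{F}_{n-1}|$, $\mathcal{S}$ occurs as a subword of the bi-infinite periodic word $\cdots\mathcal{F}_n\mathcal{F}_n\mathcal{F}_n\cdots$ obtained by repeating $\mathcal{F}_n$ periodically.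
   Context: For a finite word $w$, $|w|$ denotes its number of letters (tiles). *)

(* Defs.v *)
From HB Require Import structures.
From mathcomp Require Import all_boot.
Set Implicit Arguments. Unset Strict Implicit. Unset Printing Implicit Defensive.

Inductive letter := LA | LB.

Definition letter_eqb (x y : letter) : bool :=
  match x, y with LA, LA | LB, LB => true | _, _ => false end.
Lemma letter_eqP : Equality.axiom letter_eqb.
Proof. by case; case; constructor. Qed.
HB.instance Definition _ := hasDecEq.Build letter letter_eqP.

Definition rho_letter (x : letter) : seq letter :=
  match x with LA => [:: LA; LB] | LB => [:: LA] end.
Definition rho (w : seq letter) : seq letter := flatten (map rho_letter w).

Definition Fib (n : nat) : seq letter := iter n rho [:: LA].

(* infinite Fibonacci word as a function nat -> letter: its i-th letter is
   the i-th letter of F_{i+1} (which has length > i; all F_n are prefixes of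
   F_{n+1}, so this is the limit) *)
Definition Finf (i : nat) : letter := nth LA (Fib i.+1) i.

Definition subword_Finf (S : seq letter) : Prop :=
  exists k, S = [seq Finf (k + i) | i <- iota 0 (size S)].

Definition occurs_periodic (w S : seq letter) : Prop :=
  exists j, forall i, i < size S -> nth LA S i = nth LA w ((j + i) %% size w).

(* Main.v *)
Require Import Defs.
From mathcomp Require Import all_boot.
From mathcomp Require Import zify.
Set Implicit Arguments. Unset Strict Implicit.

Definition pre (u v : seq letter) := exists t, v = u ++ t.

Lemma pre_nth u v p : pre u v -> p < size u -> nth LA u p = nth LA v p.
Proof. by move=> [t ->] H; rewrite nth_cat H. Qed.

Lemma pre_trans u v w : pre u v -> pre v w -> pre u w.
Proof. by move=> [t ->] [s ->]; exists (t ++ s); rewrite catA. Qed.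

Lemma pre_size u v : pre u v -> size u <= size v.
Proof. by move=> [t ->]; rewrite size_cat leq_addr. Qed.

Lemma pre_catl s u v : pre u v -> pre (s ++ u) (s ++ v).
Proof. by move=> [t ->]; exists t; rewrite catA. Qed.

Lemma pre_catr u t : pre u (u ++ t).
Proof. by exists t. Qed.

Lemma rho_cat u v : rho (u ++ v) = rho u ++ rho v.
Proof. by rewrite /rho map_cat flatten_cat. Qed.

Lemma iter_rho_cat n u v : iter n rho (u ++ v) = iter n rho u ++ iter n rho v.
Proof. by elim: n => [|n IH] //=; rewrite IH rho_cat. Qed.

Definition blk n x := if x is LA then Fib n else Fib n.-1.
Definition U n w := flatten (map (blk n) w).

Lemma iter_rho_flat n w :
  iter n rho w = flatten (map (fun x => iter n rho [:: x]) w).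
Proof.
elim: w => [|x w IH]; first by elim: n => //= n ->.
by rewrite -cat1s iter_rho_cat IH.
Qed.

Lemma Fib_U n m : 0 < n -> Fib (n + m) = U n (Fib m).
Proof.
move=> Hn; rewrite /Fib iterD iter_rho_flat /U; congr flatten; apply: eq_map.
case=> //=; case: n Hn => // n _ /=; by rewrite -iterS iterSr.
Qed.

Lemma Fib_rec n : Fib n.+2 = Fib n.+1 ++ Fib n.
Proof.
rewrite /Fib iterSr /= (_ : rho [:: LA] = [:: LA] ++ [:: LB]) //.
by rewrite iter_rho_cat rho_cat -!iterS (iterSr n rho [:: LB]).
Qed.

Lemma Fib_preS n : pre (Fib n) (Fib n.+1).
Proof. case: n => [|n]; first by exists [:: LB]. by rewrite Fib_rec; apply: pre_catr. Qed.

Lemma Fib_pre a b : a <= b -> pre (Fib a) (Fib b).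
Proof.
move=> /subnK <-; elim: (b - a) => [|d IH]; first by exists [::]; rewrite cats0.
by rewrite addSn; apply: pre_trans IH (Fib_preS _).
Qed.

Lemma size_Fib n : n < size (Fib n.+1).
Proof.
elim: n => [|n IH] //; rewrite Fib_rec size_cat.
suff: 0 < size (Fib n) by lia.
by have := pre_size (@Fib_pre 0 n (leq0n n)).
Qed.

Definition noBB w := forall i, nth LA w i = LB -> nth LA w i.+1 = LA.

Lemma rho_head w : nth LA (rho w) 0 = LA.
Proof. by case: w => [|[] w]. Qed.

Lemma noBB_rho w : noBB (rho w).
Proof.
elim: w => [|x w IH]; first by move=> i; rewrite nth_nil.
rewrite /rho /= -/(rho w); case: x => /= [[|[|i]]|[|i]] //=.
- by move=> _; apply: rho_head.
- by apply: IH.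
- by apply: IH.
Qed.

Lemma noBB_Fib m : noBB (Fib m).
Proof. case: m => [|m]; first by case=> [|[]]. by rewrite /Fib iterS; apply: noBB_rho. Qed.

Lemma nth_cat3 a b c p : p < size a + size b -> nth LA (a ++ b ++ c) p = nth LA (a ++ b) p.
Proof. by move=> H; rewrite catA nth_cat size_cat H. Qed.

Lemma blk_pre n x : 0 < n -> pre (blk n x) (Fib n).
Proof. by case: x => /= H; [exists [::]; rewrite cats0 | apply: Fib_pre; lia]. Qed.

Lemma blk_size n y : 0 < n -> size (Fib n.-1) <= size (blk n y).
Proof. by case: y => //= H; apply: pre_size; apply: Fib_pre; lia. Qed.

Lemma agree n x y p : 0 < n -> ~ (x = LB /\ y = LB) ->
  p < size (blk n x) + size (Fib n.-1) - 1 ->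
  nth LA (blk n x ++ blk n y) p = nth LA (Fib n ++ Fib n) p.
Proof.
move=> Hn Hxy Hp.
case: x Hxy Hp => Hxy Hp.
  apply: pre_nth; last by rewrite size_cat; have := blk_size y Hn; simpl in *; lia.
  by apply: pre_catl; apply: blk_pre.
case: y Hxy => [_|[]//].
case: n Hn Hp => [//|[|[|m]]] _ Hp.
- by case: p Hp.
- by case: p Hp => [|[|[|]]].
- have H1 : pre (Fib m.+2 ++ Fib m.+2) (Fib m.+2 ++ Fib m.+3).
    by apply: pre_catl; apply: Fib_preS.
  have H2 : pre (Fib m.+2 ++ Fib m.+2) (Fib m.+3 ++ Fib m.+3).
    rewrite !Fib_rec -!catA; do 2 apply: pre_catl.
    apply: pre_catl; apply: (pre_trans (Fib_preS m)); exact: pre_catr.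
  have Hp2 : p < size (Fib m.+2) + size (Fib m.+2) - 1 := Hp.
  rewrite /blk -(pre_nth H1) ?(pre_nth H2) // size_cat; lia.
Qed.

Lemma nth_dbl w p : p < size w + size w -> nth LA (w ++ w) p = nth LA w (p %% size w).
Proof.
move=> H; rewrite nth_cat; case: ltnP => Hp; first by rewrite modn_small.
have -> : p = size w + (p - size w) by lia.
by rewrite modnDl modn_small ?addKn //; lia.
Qed.

Lemma mainU n w k L : 0 < n -> noBB w -> L <= size (Fib n.-1) ->
  k + L <= size (U n w) ->
  exists j, forall i, i < L -> nth LA (U n w) (k + i) = nth LA (Fib n) ((j + i) %% size (Fib n)).
Proof.
move=> Hn; elim: w k => [|x w IH] k Hw HL Hk.
  by exists 0 => i Hi; move: Hk; rewrite /U /=; lia.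
have Hw' : noBB w by move=> i; apply: (Hw i.+1).
rewrite /U /= -/(U n w) in Hk *.
have Hsn : size (Fib n.-1) <= size (Fib n) by apply: pre_size; apply: Fib_pre; lia.
have Hbx := pre_size (blk_pre x Hn).
case: (leqP (size (blk n x)) k) => Hkx.
  have Hk' : k - size (blk n x) + L <= size (U n w) by rewrite size_cat in Hk; lia.
  have [j Hj] := IH (k - size (blk n x)) Hw' HL Hk'.
  exists j => i Hi; rewrite nth_cat ltnNge (leq_trans Hkx (leq_addr _ _)) /=.
  by rewrite -Hj // addnBAC.
exists k => i Hi; rewrite -nth_dbl; last by lia.
have Hxy : ~ (x = LB /\ nth LA w 0 = LB).
  by move=> [Ex Ey]; have := Hw 0; rewrite /= Ex => /(_ erefl) /=; rewrite Ey.
case: w IH Hw Hw' Hk Hxy => [|y w] _ Hw Hw' Hk Hxy.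
  rewrite cats0 (_ : nth LA (blk n x) (k + i) = nth LA (blk n x ++ blk n LA) (k+i)).
    by apply: agree => //; try lia; move=> [].
  rewrite nth_cat ifT //; move: Hk; rewrite /U /= cats0; lia.
rewrite /U /= -/(U n w) nth_cat3; last first.
  have := blk_size y Hn; lia.
by apply: agree => //; lia.
Qed.

Theorem lemma3p6 (S : seq letter) (n : nat) :
  subword_Finf S -> 1 <= n -> size S <= size (Fib n.-1) ->
  occurs_periodic (Fib n) S.
Proof.
move=> [k HS] Hn Hsz.
have Hbig : k + size S < size (Fib (k + size S).+1) := size_Fib _.
have HkL : k + size S <= size (U n (Fib (k + size S))).
  rewrite -Fib_U //; have := pre_size (@Fib_pre (k + size S).+1 (n + (k + size S)) ltac:(lia)); lia.
have [j Hj] := mainU Hn (@noBB_Fib (k + size S)) Hsz HkL.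
exists j => i Hi; rewrite -Hj // -Fib_U // {1}HS (nth_map 0) ?size_iota //.
rewrite nth_iota // add0n /Finf; apply: pre_nth; [apply: Fib_pre; lia | exact: size_Fib].
Qed.
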